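(* For each $1\le n\le\omega$: (1) $X_n^{\mathrm{inj}}$ is a comeager subset of $X_n$ and is invariant under the action $a_n$; (2) the orbit equivalence relation of $a_n$ restricted to $X_n^{\mathrm{inj}}$ equals $F_n\restriction X_n^{\mathrm{inj}}$.
   Context: Let $\mathbb N=\{0,1,2,\dots\}$ and identify $2^{\mathbb N}$ with $\mathcal P(\mathbb N)$. For $1\le m\le\omega$ and $x\in((2^{\mathbb N})^{\mathbb N})^m$ define recursively: $A^x_1=\{x(0)(k):k\in\mathbb N\}\subseteq 2^{\mathbb N}$; for $1\le j<m$ and $l\in\mathbb N$, $a^{x,l}_1=\{x(0)(k):x(1)(l)(k)=1\}$ and $a^{x,l}_{j}=\{a^{x,k}_{j-1}:x(j)(l)(k)=1\}$ for $j\ge 2$; and $A^x_{j+1}=\{a^{x,k}_j:k\in\mathbb N\}$ for $1\le j<m$. Let $X_1=(2^{\mathbb N})^{\mathbb N}$, and for $2\le n\le\omega$ let $X_n$ be the set of $x\in((2^{\mathbb N})^{\mathbb N})^n$ such that for every $1\le i<n$: (1) for every $m$ there is $k$ with $x(i)(k)(m)=1$; (2) for every $k$ there is $m$ with $x(i)(k)(m)=1$; (3) for all $k,l_1,l_2$, if $x(i-1)(l_1)=x(i-1)(l_2)$ then $x(i)(k)(l_1)=x(i)(k)(l_2)$. For $1\le n<\omega$, $F_n$ on $X_n$ is $x\mathrel{F_n}y\iff A^x_n=A^y_n$; $F_\omega$ on $X_\omega$ is $x\mathrel{F_\omega}y\iff A^x_j=A^y_j$ for all $1\le j<\omega$. Actions: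 $S_\infty$ is the group of permutations of $\mathbb N$. For $g\in S_\infty$ and $z\in(2^{\mathbb N})^{\mathbb N}$ let $(g\cdot_a z)(m)=z(g^{-1}(m))$. For $(g,h)\in S_\infty\times S_\infty$ and $z\in(2^{\mathbb N})^{\mathbb N}$ let $((g,h)\cdot_c z)(m)(j)=z(h^{-1}(m))(g^{-1}(j))$. The action $a_n$ of $(S_\infty)^n$ on $((2^{\mathbb N})^{\mathbb N})^n$ is $(g\cdot_{a_n}x)(0)=g(0)\cdot_a x(0)$ and $(g\cdot_{a_n}x)(k+1)=(g(k),g(k+1))\cdot_c x(k+1)$ for $k+1<n$. $X_n^{\mathrm{inj}}$ is the set of $x\in X_n$ such that $k\mapsto x(0)(k)$ is injective and, for each $1\le k<n$, $l\mapsto a^{x,l}_k$ is injective. *)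

(* Defs.v *)
From HB Require Import structures.
From mathcomp Require Import all_boot.
From mathcomp Require Import boolp classical_sets functions.
Set Implicit Arguments. Unset Strict Implicit. Unset Printing Implicit Defensive.
Local Open Scope classical_set_scope.

Inductive enat := Fin of nat | Omega.

Definition ltn_e (i : nat) (n : enat) : bool :=
  match n with Fin m => (i < m)%N | Omega => true end.

Definition one_le (n : enat) : Prop :=
  match n with Fin m => (1 <= m)%N | Omega => True end.

(** Index set {i : i < n} and the space ((2^N)^N)^n, a point x being
    read as x(i)(k)(m) = x i k m. *)
Definition Idx (n : enat) := {i : nat | ltn_e i n}.
Definition Y (n : enat) := Idx n -> nat -> nat -> bool.

(** Extension by a default value outside the index set (only used at valid
    indices in what follows). *)
Definition ext (n : enat) (x : Y n) (i : nat) : nat -> nat -> bool :=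
  match (insub i : option (Idx n)) with
  | Some ii => x ii
  | None => fun _ _ => false
  end.

(** Product topology on ((2^N)^N)^n (2 = {0,1} discrete): U is open iff
    membership of each point is witnessed by finitely many coordinates. *)
Definition popen (n : enat) (U : set (Y n)) : Prop :=
  forall x, U x -> exists N : nat, forall y : Y n,
    (forall (i : Idx n) k m, (val i < N)%N -> (k < N)%N -> (m < N)%N ->
       y i k m = x i k m) -> U y.

Definition rel_open (n : enat) (X U : set (Y n)) : Prop :=
  exists V, popen V /\ U = V `&` X.

Definition rel_closure (n : enat) (X B : set (Y n)) : set (Y n) :=
  [set x | X x /\ forall V, popen V -> V x -> exists y, [/\ X y, B y & V y]].

Definition nowhere_dense_in (n : enat) (X B : set (Y n)) : Prop :=
  forall U, rel_open X U -> U `<=` rel_closure X B -> U = set0.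

Definition meager_in (n : enat) (X M : set (Y n)) : Prop :=
  exists F : nat -> set (Y n),
    (forall k, nowhere_dense_in X (F k)) /\ M `<=` \bigcup_k F k.

Definition comeager_in (n : enat) (X A : set (Y n)) : Prop :=
  A `<=` X /\ meager_in X (X `\` A).

Definition Xn (n : enat) : set (Y n) :=
  [set x | forall i : nat, (1 <= i)%N -> ltn_e i n ->
     [/\ (forall m, exists k, ext x i k m = true),
         (forall k, exists m, ext x i k m = true) &
         (forall k l1 l2, ext x i.-1 l1 = ext x i.-1 l2 ->
            ext x i k l1 = ext x i k l2)]].

Fixpoint Ty (j : nat) : Type :=
  match j with 0 => nat -> bool | S j' => set (Ty j') end.

(** elt x j l = a^{x,l}_j for j >= 1, and elt x 0 l = x(0)(l). *)
Fixpoint elt (n : enat) (x : Y n) (j : nat) : nat -> Ty j :=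
  match j return nat -> Ty j with
  | 0 => fun l => ext x 0 l
  | S j' => fun l => [set elt x j' k | k in [set k | ext x (S j') l k = true]]
  end.

(** Aset x j = A^x_{j+1}. *)
Arguments elt {n} x j.
Definition Aset (n : enat) (x : Y n) (j : nat) : set (Ty j) := range (elt x j).
Arguments Aset {n} x j.

Definition Frel (n : enat) (x y : Y n) : Prop :=
  match n with
  | Fin m => Aset x m.-1 = Aset y m.-1
  | Omega => forall j, Aset x j = Aset y j
  end.

Definition Xinj (n : enat) : set (Y n) :=
  [set x | Xn x /\ forall k, ltn_e k n -> injective (elt x k)].

Record sinf := Sinf {
  pf : nat -> nat; pinv : nat -> nat;
  pfK : cancel pf pinv; pinvK : cancel pinv pf }.

Definition sinf_id : sinf := @Sinf id id (fun _ => erefl) (fun _ => erefl).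

Definition gext (n : enat) (g : Idx n -> sinf) (i : nat) : sinf :=
  match (insub i : option (Idx n)) with Some ii => g ii | None => sinf_id end.

Definition act (n : enat) (g : Idx n -> sinf) (x : Y n) : Y n :=
  fun i m j =>
    match val i with
    | 0 => x i (pinv (gext g 0) m) j
    | S k => x i (pinv (gext g (S k)) m) (pinv (gext g k) j)
    end.

Arguments Xn : clear implicits.
Arguments Xinj : clear implicits.

(* Main.v *)
Require Import Defs.
From mathcomp Require Import all_boot.
From mathcomp Require Import boolp classical_sets functions.
From mathcomp Require Import zify.
Local Open Scope classical_set_scope.
Set Implicit Arguments. Unset Strict Implicit.

Lemma ext_valid n (x : Y n) i (H : ltn_e i n) : ext x i = x (exist _ i H).
Proof. by rewrite /ext insubT. Qed.

Lemma gext_valid n (g : Idx n -> sinf) i (H : ltn_e i n) : gext g i = g (exist _ i H).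
Proof. by rewrite /gext insubT. Qed.

Lemma valid_le n i j : (j <= i)%N -> ltn_e i n -> ltn_e j n.
Proof. by case: n => //= m h1 h2; apply: leq_ltn_trans h1 h2. Qed.

Lemma bool_iff (b1 b2 : bool) : (b1 <-> b2) -> b1 = b2.
Proof. by move=> h; apply/idP/idP => /h. Qed.

Lemma elt_succ_inj n (x : Y n) j l k : injective (elt x j) ->
  ((elt x j.+1 l : set (Ty j)) (elt x j k) <-> ext x j.+1 l k).
Proof.
move=> inj; split => /=.
  by case=> k' hk' /inj <-.
by move=> h; exists k.
Qed.

Definition zpat N k m := if (k < N)%N then (m == N + 2*k)%N || (m == N + 2*k + 1)%N
  else (m < N)%N || (m == k).

Lemma zpat_aux N k l : (k < N)%N -> (forall m, (N <= m)%N -> zpat N k m = zpat N l m) -> k = l.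
Proof.
move=> hk h.
have h1 := h (N + 2*k)%N; have h2 := h (N + 2*k + 1)%N.
rewrite /zpat hk eqxx /= in h1 h2.
idtac.
have {h1} := h1 (leq_addr _ _); have {h2} := h2 ltac:(lia).
rewrite eqxx orbT; case: ifP => hl.
  by move=> /esym/orP[]h3 /esym/orP[]h4; lia.
by move=> /esym/orP[]h3 /esym/orP[]h4; lia.
Qed.

Lemma zpat_inj N k l : (forall m, (N <= m)%N -> zpat N k m = zpat N l m) -> k = l.
Proof.
move=> h; case: (ltnP k N) => hk; first exact: (zpat_aux hk h).
case: (ltnP l N) => hl.
  by apply/esym/(zpat_aux hl) => m hm; rewrite h.
have := h k hk; rewrite /zpat ltnNge hk ltnNge hl /= eqxx.
by move=> /esym/eqP.
Qed.

Definition colp n (g : Idx n -> sinf) i : nat -> nat :=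
  if i is j.+1 then Defs.pinv (gext g j) else id.
Definition colf n (g : Idx n -> sinf) i : nat -> nat :=
  if i is j.+1 then Defs.pf (gext g j) else id.
Lemma colpK n (g : Idx n -> sinf) i m : colp g i (colf g i m) = m.
Proof. by case: i => //= j; rewrite Defs.pfK. Qed.
Lemma colfK n (g : Idx n -> sinf) i m : colf g i (colp g i m) = m.
Proof. by case: i => //= j; rewrite Defs.pinvK. Qed.

Lemma ext_act n (g : Idx n -> sinf) (x : Y n) i k m : ltn_e i n ->
  ext (act g x) i k m = ext x i (Defs.pinv (gext g i) k) (colp g i m).
Proof. by move=> H; rewrite !(ext_valid _ H) /act /=; case: i H. Qed.

Lemma elt_act n (g : Idx n -> sinf) (x : Y n) j : ltn_e j n ->
  elt (act g x) j = elt x j \o Defs.pinv (gext g j).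
Proof.
elim: j => [|j IH] H.
  by apply/funext => l; apply/funext => m /=; rewrite ext_act.
have Hj : ltn_e j n by apply: valid_le H.
apply/funext => l /=; rewrite (IH Hj).
apply/seteqP; split => t [k hk <-].
  exists (Defs.pinv (gext g j) k) => //.
  by move: hk; rewrite /= ext_act.
exists (Defs.pf (gext g j) k); last by rewrite /= Defs.pfK.
by rewrite /= ext_act //= Defs.pfK.
Qed.

Lemma Xn_act n (g : Idx n -> sinf) (x : Y n) : Xn n x -> Xn n (act g x).
Proof.
move=> Xx i hi Hi; have [X1 X2 X3] := Xx i hi Hi.
have Hi1 : ltn_e i.-1 n by apply: valid_le Hi; apply: leq_pred.
split.
- move=> m; have [k' hk'] := X1 (colp g i m).
  by exists (Defs.pf (gext g i) k'); rewrite ext_act // Defs.pfK.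
- move=> k; have [m' hm'] := X2 (Defs.pinv (gext g i) k).
  by exists (colf g i m'); rewrite ext_act // colpK.
- move=> k l1 l2 E.
  have E' : ext x i.-1 (Defs.pinv (gext g i.-1) l1) = ext x i.-1 (Defs.pinv (gext g i.-1) l2).
    apply/funext => m; have := congr1 (fun f => f (colf g i.-1 m)) E.
    by rewrite /= !ext_act // colpK.
  rewrite !ext_act //; case: i hi Hi X1 X2 X3 Hi1 E E' => // j _ Hi X1 X2 X3 Hi1 E E' /=.
  exact: X3.
Qed.

Lemma range_comp_perm T (f : nat -> T) (s : sinf) : range (f \o Defs.pinv s) = range f.
Proof.
apply/seteqP; split => t [k _ <-].
  by exists (Defs.pinv s k).
by exists (Defs.pf s k) => //=; rewrite Defs.pfK.
Qed.

Lemma Xinj_act n (g : Idx n -> sinf) (x : Y n) : Xinj n x -> Xinj n (act g x).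
Proof.
move=> [Xx inj]; split; first exact: Xn_act.
move=> k Hk; rewrite elt_act // => a b /= /(inj k Hk).
exact: (can_inj (Defs.pinvK _)).
Qed.

Definition zmk n (x : Y n) N : Y n := fun ii k m =>
  if [&& (val ii < N)%N, (k < N)%N & (m < N)%N] then x ii k m else zpat N k m.

Lemma zmk_big n (x : Y n) N ii k m : (N <= m)%N -> zmk x N ii k m = zpat N k m.
Proof. by move=> h; rewrite /zmk (ltnNge m) h !andbF. Qed.

Lemma zmk_bigk n (x : Y n) N ii k m : (N <= k)%N -> zmk x N ii k m = zpat N k m.
Proof. by move=> h; rewrite /zmk (ltnNge k) h andbF. Qed.

Lemma zmk_inj n (x : Y n) N ii k l : zmk x N ii k = zmk x N ii l -> k = l.
Proof.
move=> E; apply: (@zpat_inj N) => m hm.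
by rewrite -!(zmk_big x ii _ hm) E.
Qed.

Lemma Xn_zmk n (x : Y n) N : Xn n (zmk x N).
Proof.
move=> i hi Hi; rewrite !(ext_valid _ Hi); split.
- move=> m; case: (ltnP m N) => hm.
    by exists N; rewrite zmk_bigk // /zpat ltnn hm.
  by exists m; rewrite zmk_big // /zpat ltnNge hm /= eqxx.
- move=> k; case: (ltnP k N) => hk.
    by exists (N + 2 * k)%N; rewrite zmk_big ?leq_addr // /zpat hk eqxx.
  by exists k; rewrite zmk_big // /zpat ltnNge hk /= eqxx.
- move=> k l1 l2; have Hi1 : ltn_e i.-1 n by apply: valid_le Hi; apply: leq_pred.
  by rewrite (ext_valid _ Hi1) => /zmk_inj ->.
Qed.

Definition Bset (n : enat) (i k l : nat) : set (Y n) :=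
  [set x | ltn_e i n /\ k != l /\ ext x i k = ext x i l].
Arguments Bset : clear implicits.

Lemma popen_setT n : popen (@setT (Y n)).
Proof. by move=> x _; exists 0%N. Qed.

Lemma nd_B n i k l : nowhere_dense_in (Xn n) (Bset n i k l).
Proof.
move=> U [V [pV ->]] Usub; apply/seteqP; split => // x [Vx Xx]; exfalso.
have [N HN] := pV x Vx.
set z := zmk x N.
have Vz : V z.
  apply: HN => ii k' m' h1 h2 h3; by rewrite /z /zmk h1 h2 h3.
have Cz := Usub z (conj Vz (Xn_zmk x N)).
have [_ Hcl] := Cz.
have [y0 [_ [Hi [Hkl _]] _]] := Hcl _ (@popen_setT n) I.
set ii : Idx n := exist _ i Hi.
have Hz : z ii k <> z ii l by move=> /zmk_inj E; move: Hkl; rewrite E eqxx.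
have [m0 Hm0] : exists m0, z ii k m0 <> z ii l m0.
  case: (pselect (exists m0, z ii k m0 <> z ii l m0)) => // H; exfalso.
  apply: Hz; apply/funext => m; case: (pselect (z ii k m = z ii l m)) => // Hn.
  by case: H; exists m.
pose W := [set y : Y n | y ii k m0 = z ii k m0 /\ y ii l m0 = z ii l m0].
have pW : popen W.
  move=> y [Wy1 Wy2]; exists (maxn i (maxn k (maxn l m0))).+1 => y' Hy'.
  by split; rewrite Hy' //= ?Wy1 ?Wy2 //; lia.
have [y1 [_ [_ [_ E]] [W1 W2]]] := Hcl W pW (conj erefl erefl).
apply: Hm0; rewrite -W1 -W2 -!(ext_valid _ Hi).
by rewrite E.
Qed.

Lemma inj_of_rows n (x : Y n) :
  (forall i k l, ltn_e i n -> ext x i k = ext x i l -> k = l) ->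
  forall j, ltn_e j n -> injective (elt x j).
Proof.
move=> R; elim => [|j IH] Hj.
  by move=> a b /= E; apply: (R 0%N) => //; apply/funext => m; rewrite E.
have Hj' : ltn_e j n by apply: valid_le Hj.
have inj := IH Hj'.
move=> a b E; apply: (R j.+1) => //; apply/funext => k; apply: bool_iff.
split.
  by move/(elt_succ_inj a k inj); rewrite E => /(elt_succ_inj b k inj).
by move/(elt_succ_inj b k inj); rewrite -E => /(elt_succ_inj a k inj).
Qed.

Lemma comeager_Xinj n : comeager_in (Xn n) (Xinj n).
Proof.
split; first by move=> x [].
pose F p : set (Y n) := match unpickle p with
  Some (i, (k, l)) => Bset n i k l | None => Bset n 0 0 0 end.
exists F; split.
  by move=> p; rewrite /F; case: (unpickle p) => [[i [k l]]|]; apply: nd_B.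
move=> x [Xx nX].
case: (pselect (exists p, F p x)) => [[p Hp]|H]; first by exists p.
exfalso; apply: nX; split => //; apply: inj_of_rows => i k l Hi E.
case: (eqVneq k l) => // Hkl; exfalso; apply: H.
by exists (pickle (i, (k, l))); rewrite /F pickleK.
Qed.

Lemma Aset_act n (g : Idx n -> sinf) (x : Y n) j : ltn_e j n -> Aset (act g x) j = Aset x j.
Proof. by move=> H; rewrite /Aset elt_act // range_comp_perm. Qed.

Lemma Aset_down n (x : Y n) j : Xn n x -> ltn_e j.+1 n ->
  Aset x j = [set t | exists2 S : set (Ty j), Aset x j.+1 S & S t].
Proof.
move=> Xx H; have [X1 _ _] := Xx j.+1 isT H.
apply/seteqP; split => t.
  case=> k _ <-; have [l hl] := X1 k.
  by exists (elt x j.+1 l); [exists l | exists k].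
by case=> S [l _ <-] [k _ <-]; exists k.
Qed.

Lemma Frel_all n (hn : one_le n) (x y : Y n) : Xn n x -> Xn n y -> Frel x y ->
  forall j, ltn_e j n -> Aset x j = Aset y j.
Proof.
move=> Xx Xy; case: n hn x y Xx Xy => [m|] hn x y Xx Xy /= E; last by move=> j _; apply: E.
have key : forall d j, (j + d = m.-1)%N -> Aset x j = Aset y j.
  elim => [|d IH] j hj; first by rewrite addn0 in hj; rewrite hj.
  have H : ltn_e j.+1 (Fin m) by rewrite /=; lia.
  rewrite (Aset_down Xx H) (Aset_down Xy H) (IH j.+1) //; lia.
move=> j /= hj; apply: (key (m.-1 - j)%N); lia.
Qed.

Lemma match_perm T (a b : nat -> T) : injective a -> injective b -> range a = range b ->
  exists s : sinf, forall l, b (Defs.pf s l) = a l.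
Proof.
move=> ia ib E.
have fa : forall l, exists k, b k = a l.
  move=> l; have : range b (a l) by rewrite -E; exists l.
  by case=> k _ <-; exists k.
have fb : forall k, exists l, a l = b k.
  move=> k; have : range a (b k) by rewrite E; exists k.
  by case=> l _ <-; exists l.
have [f Hf] := choice fa; have [h Hh] := choice fb.
have c1 : cancel f h by move=> l; apply: ia; rewrite Hh Hf.
have c2 : cancel h f by move=> k; apply: ib; rewrite Hf Hh.
by exists (Defs.Sinf c1 c2).
Qed.

Theorem mainTheorem4 (n : enat) (hn : one_le n) :
  (comeager_in (Xn n) (Xinj n) /\
   (forall (g : Idx n -> sinf) (x : Y n), Xinj n x -> Xinj n (act g x))) /\
  (forall x y : Y n, Xinj n x -> Xinj n y ->
     ((exists g : Idx n -> sinf, act g x = y) <-> Frel x y)).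
Proof.
split; first by split; [exact: comeager_Xinj | move=> g x; exact: Xinj_act].
move=> x y [Xx ix] [Xy iy]; split.
  case=> g <-; case: n hn g x Xx ix {y Xy iy} => [m|] hn g x Xx ix /=.
    by rewrite Aset_act //=; move: hn => /= hn; lia.
  by move=> j; rewrite Aset_act.
move=> Fxy; have AE := Frel_all hn Xx Xy Fxy.
have hs : forall ii : Idx n, exists s : sinf,
    forall l, elt y (val ii) (Defs.pf s l) = elt x (val ii) l.
  by case=> i Hi /=; apply: match_perm; [exact: ix | exact: iy | exact: AE].
have [g Hg] := choice hs; exists g.
apply/funext => -[i Hi]; apply/funext => k; apply/funext => m.
rewrite /act /=; case: i Hi => [|j] Hi.
  have := Hg (exist _ 0%N Hi) (Defs.pinv (gext g 0) k).
  rewrite /= (gext_valid _ Hi) Defs.pinvK !(ext_valid _ Hi) => ->; by [].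
have Hj : ltn_e j n by apply: valid_le Hi.
rewrite (gext_valid _ Hi) (gext_valid _ Hj).
set s1 := g _; set s0 := g _.
have H1 : elt y j.+1 k = elt x j.+1 (Defs.pinv s1 k).
  by have := Hg (exist _ j.+1 Hi) (Defs.pinv s1 k); rewrite -/s1 Defs.pinvK.
have H0 : elt y j m = elt x j (Defs.pinv s0 m).
  by have := Hg (exist _ j Hj) (Defs.pinv s0 m); rewrite -/s0 Defs.pinvK.
rewrite -!(ext_valid _ Hi); apply: bool_iff; split.
  move/(elt_succ_inj _ _ (ix j Hj)); rewrite -H1 -H0.
  by move/(elt_succ_inj _ _ (iy j Hj)).
move/(elt_succ_inj _ _ (iy j Hj)); rewrite H1 H0.
by move/(elt_succ_inj _ _ (ix j Hj)).
Qed.
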